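(* Let $\Omega\subset\mathbb{R}^n$ ($n\ge2$) be a bounded domain with Lipschitz boundary, $\gamma,\beta,\theta\in M_0(\Omega)$ with $\theta(x)\ge\gamma(x)+\beta(x)+\varepsilon_0$ a.e. for some $\varepsilon_0>0$, and let $p\in M_0(\Omega)$ with $p(x)\ge\theta(x)$ for a.e. $x\in\Omega$. Then $W^{1,p(x)}(\Omega)\subset S_{1,\gamma(x),\beta(x),\theta(x)}(\Omega)$.
   Context: $M_0(\Omega)$: measurable $p:\Omega\to[1,\infty]$ with $1\le p^-\le p(x)\le p^+<\infty$ a.e. $W^{1,p(x)}(\Omega)=\{u\in L^{p(x)}(\Omega):|\nabla u|\in L^{p(x)}(\Omega)\}$ (variable exponent Sobolev space). $D_i=\partial/\partial x_i$. $S_{1,\gamma(x),\beta(x),\theta(x)}(\Omega)=\{u\in L^1(\Omega):\int_\Omega|u|^{\theta(x)}dx+\sum_{i=1}^n\int_\Omega|u|^{\gamma(x)}|D_iu|^{\beta(x)}dx<\infty\}$. *)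

(* Defs.v *)
From HB Require Import structures.
From mathcomp Require Import all_boot all_order all_algebra.
From mathcomp Require Import all_classical all_reals all_analysis.
Set Implicit Arguments. Unset Strict Implicit. Unset Printing Implicit Defensive.
Import Order.TTheory GRing.Theory Num.Theory.
Import numFieldNormedType.Exports.
Local Open Scope classical_set_scope.
Local Open Scope ring_scope.

(* measurable structure on R^n = 'rV[R]_n : product sigma-algebra generated by
   the coordinate maps into (Lebesgue-measurable sets of) R *)
Section measurable_rV.
Context (R : realType) (n : nat).
Let coors : 'I_n -> 'rV[R]_n -> measurableTypeR R := fun i x => x ord0 i.
Let rV_set0 : g_sigma_preimage coors set0.
Proof. exact: sigma_algebra0. Qed.
Let rV_setC A : g_sigma_preimage coors A -> g_sigma_preimage coors (~` A).
Proof. exact: sigma_algebraC. Qed.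
Let rV_bigcup (F : _^nat) : (forall i, g_sigma_preimage coors (F i)) ->
  g_sigma_preimage coors (\bigcup_i (F i)).
Proof. exact: sigma_algebra_bigcup. Qed.
HB.instance Definition _ := @isMeasurable.Build
  (measure_tuple_display default_measure_display)
  'rV[R]_n (g_sigma_preimage coors) rV_set0 rV_setC rV_bigcup.
End measurable_rV.

(* n-dimensional Lebesgue measure, as the iterated product measure
   lambda_1 x lambda_{n} transported to 'rV_(1+n) along row_mx *)
Fixpoint lebn (R : realType) (n : nat) : set 'rV[R]_n -> \bar R :=
  match n with
  | 0 => \d_(0 : 'rV[R]_0)
  | m.+1 => pushforward (product_measure1 (@lebesgue_measure R) (@lebn R m))
              (fun p : measurableTypeR R * 'rV[R]_m =>
                 (row_mx (\row_(j < 1) p.1) p.2 : 'rV[R]_m.+1))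
  end.

Section sobolev_defs.
Context (R : realType) (n : nat).
Local Notation V := 'rV[R]_n.
Local Notation mu := (@lebn R n).

Definition bounded_domain (Om : set V) : Prop :=
  [/\ Om !=set0, open Om, connected Om & bounded_set Om].

(* Lipschitz boundary (Grisvard, Def. 1.2.1.1): near every boundary point, after
   an orthogonal change of coordinates y |-> x0 + y *m Q, the domain is the
   region strictly above the graph y_i = a(y') of a Lipschitz function a of the
   remaining coordinates y', inside a cylinder |y_j| < r (j <> i), |y_i| < h. *)
Definition lipschitz_boundary (Om : set V) : Prop :=
  forall x0 : V, (closure Om `\` Om) x0 ->
  exists (Q : 'M[R]_n) (i : 'I_n) (a : V -> R) (L r h : R),
  [/\ Q *m Q^T = 1%:M, 0 < r, 0 < h &
      (forall y z : V, `|a y - a z| <= L * `|y - z|)] /\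
  [/\
      (forall y z : V, (forall j, j != i -> y ord0 j = z ord0 j) -> a y = a z),
      (forall y : V, (forall j, j != i -> `|y ord0 j| < r) -> `|a y| < h / 2) &
      (forall y : V, (forall j, j != i -> `|y ord0 j| < r) -> `|y ord0 i| < h ->
         (Om (x0 + y *m Q) <-> a y < y ord0 i))].

Definition partial (i : 'I_n) (f : V -> R) : V -> R :=
  fun x => derive f x (delta_mx 0 i : V).

Definition iter_partial (s : seq 'I_n) (f : V -> R) : V -> R :=
  foldr partial f s.

Definition test_function (Om : set V) (phi : V -> R) : Prop :=
  (forall (s : seq 'I_n) (x : V), differentiable (iter_partial s phi) x) /\
  compact (closure [set x | phi x != 0]) /\ closure [set x | phi x != 0] `<=` Om.

Definition weak_gradient (Om : set V) (u : V -> R) (g : 'I_n -> V -> R) : Prop :=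
  (forall i, measurable_fun Om (g i)) /\
  (forall K : set V, compact K -> K `<=` Om ->
     mu.-integrable K (EFin \o u) /\ forall i, mu.-integrable K (EFin \o g i)) /\
  forall (i : 'I_n) (phi : V -> R), test_function Om phi ->
    (\int[mu]_(x in Om) (u x * partial i phi x)%:E =
     - \int[mu]_(x in Om) (g i x * phi x)%:E)%E.

Definition M0 (Om : set V) (p : V -> R) : Prop :=
  measurable_fun Om p /\
  exists pp : R, {ae mu, forall x, Om x -> 1 <= p x <= pp}.

Definition Lpx (Om : set V) (p : V -> R) (u : V -> R) : Prop :=
  measurable_fun Om u /\
  exists lam : R, 0 < lam /\
    (\int[mu]_(x in Om) ((`|u x| / lam) `^ p x)%:E < +oo)%E.

Definition W1px (Om : set V) (p : V -> R) : set (V -> R) :=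
  fun u => Lpx Om p u /\
    exists g : 'I_n -> V -> R, weak_gradient Om u g /\
      Lpx Om p (fun x => Num.sqrt (\sum_i (g i x) ^+ 2)).

Definition S1 (Om : set V) (gam bet the : V -> R) : set (V -> R) :=
  fun u => mu.-integrable Om (EFin \o u) /\
    exists g : 'I_n -> V -> R, weak_gradient Om u g /\
      (\int[mu]_(x in Om) (`|u x| `^ the x)%:E < +oo)%E /\
      forall i : 'I_n,
        (\int[mu]_(x in Om) (`|u x| `^ gam x * `|g i x| `^ bet x)%:E < +oo)%E.

End sobolev_defs.

(* Main.v *)
Require Import Defs.
From HB Require Import structures.
From mathcomp Require Import all_boot all_order all_algebra.
From mathcomp Require Import all_classical all_reals all_analysis.
From mathcomp Require Import lra.
From mathcomp Require Import measurable_realfun.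
Set Implicit Arguments. Unset Strict Implicit. Unset Printing Implicit Defensive.
Import Order.TTheory GRing.Theory Num.Theory.
Import numFieldNormedType.Exports.
Local Open Scope classical_set_scope.
Local Open Scope ring_scope.

Section rV.
Context (R : realType).
Lemma measurable_coord n (i : 'I_n) :
  measurable_fun [set: 'rV[R]_n] (fun x : 'rV[R]_n => (x ord0 i : R)).
Proof.
move=> _ Y mY; rewrite setTI; apply: sub_sigma_algebra => /=.
rewrite -bigcup_seq/=; exists i => /=; first by rewrite mem_index_enum.
by exists Y => //; rewrite setTI.
Qed.

Lemma measurable_fun_rVP d1 (T1 : measurableType d1) n (f : T1 -> 'rV[R]_n) :
  (forall i, measurable_fun [set: T1] (fun x => (f x ord0 i : R))) ->
  measurable_fun [set: T1] f.
Proof.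
move=> mf _ Y mY; rewrite setTI.
have H : g_sigma_preimage
    (fun i => (fun x : 'rV[R]_n => (x ord0 i : measurableTypeR R)) \o f) `<=` measurable.
  apply: smallest_sub; first exact: sigma_algebra_measurable.
  case: n => [|n] in f mf Y mY *; first by rewrite big_ord0.
  rewrite -bigcup_mkord_ord; apply: bigcup_sub => i Ii.
  by move=> A [B mB <-]; exact: mf.
apply: H; rewrite g_sigma_preimage_comp; exists Y => //; by rewrite setTI.
Qed.

Definition phi m (p : measurableTypeR R * 'rV[R]_m) : 'rV[R]_m.+1 :=
  row_mx (\row_(j < 1) p.1) p.2.

Lemma measurable_phi m : measurable_fun setT (@phi m).
Proof.
apply: measurable_fun_rVP => i.
case: (splitP (i : 'I_(1 + m))) => [j|k] Hi.
  have -> : i = lshift m j by apply: val_inj.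
  rewrite (_ : (fun x => _) = (fun x => x.1)); first exact: measurable_fst.
  by apply/funext => x; rewrite /phi (row_mxEl (\row_(j0 < 1) x.1) x.2) mxE.
have -> : i = rshift 1 k by apply: val_inj.
rewrite (_ : (fun x => _) = (fun x : measurableTypeR R * 'rV[R]_m => x.2 ord0 k)).
  exact: (measurableT_comp (measurable_coord k) measurable_snd).
by apply/funext => x; rewrite /phi (row_mxEr (\row_(j0 < 1) x.1) x.2).
Qed.

Lemma measurable_rVset n (I : 'I_n -> set R) :
  (forall i, measurable (I i)) ->
  measurable [set x : 'rV[R]_n | forall i, I i (x ord0 i)].
Proof.
move=> mI.
rewrite (_ : [set x | _] = \bigcap_(i in [set: 'I_n]) ((fun x : 'rV[R]_n => x ord0 i) @^-1` I i)).
  apply: fin_bigcap_measurable; first exact: finite_finset.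
  move=> i _; rewrite -[X in measurable X]setTI; exact: measurable_coord.
by apply/seteqP; split => x /= H i; [move=> _|]; apply: H.
Qed.

Definition cbox m (M : R) : set 'rV[R]_m := [set x | forall i, `[-M, M]%classic (x ord0 i)].

Arguments cbox : clear implicits.
Lemma measurable_cbox m M : measurable (cbox m M).
Proof. by apply: (@measurable_rVset m (fun=> `[-M, M]%classic)) => i; exact: measurable_itv. Qed.

Lemma phi_cbox m M : @phi m @^-1` cbox m.+1 M = `[-M, M]%classic `*` cbox m M.
Proof.
apply/seteqP; split => [[a v]|[a v] [/= Ha Hv]] /=.
  move=> H; split.
    by have := H (@lshift 1 m ord0); rewrite /phi (row_mxEl (\row_(j0 < 1) a) v) mxE.
  by move=> k; have := H (rshift 1 k); rewrite /phi (row_mxEr (\row_(j0 < 1) a) v).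
move=> i; case: (splitP (i : 'I_(1 + m))) => [j|k] Hi.
  have -> : i = lshift m j by apply: val_inj.
  by rewrite /phi (row_mxEl (\row_(j0 < 1) a) v) mxE.
have -> : i = rshift 1 k by apply: val_inj.
by rewrite /phi (row_mxEr (\row_(j0 < 1) a) v); apply: Hv.
Qed.

Lemma coord_le_sum n (x : 'rV[R]_n) i : `|x ord0 i| <= \sum_j `|x ord0 j|.
Proof.
by rewrite (bigD1 i) //= lerDl sumr_ge0.
Qed.

Lemma cbox_cover n : [set: 'rV[R]_n] = \bigcup_(k : nat) cbox n k%:R.
Proof.
apply/seteqP; split => x // _.
exists (Num.truncn (\sum_j `|x ord0 j|)).+1 => //= i.
rewrite /= in_itv /= -ler_norml.
exact: (le_trans (coord_le_sum x i) (ltW (truncnS_gt _))).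
Qed.

Definition lebS m (mu : {sigma_finite_measure set 'rV[R]_m -> \bar R})
  (hb : forall M, (mu (cbox m M) < +oo)%E) : set 'rV[R]_m.+1 -> \bar R :=
  fun A => ((@lebesgue_measure R) \x mu)%E (@phi m @^-1` A).

Section lebS_measure.
Local Open Scope ereal_scope.
Context (m : nat) (mu : {sigma_finite_measure set 'rV[R]_m -> \bar R})
  (hb : forall M, (mu (cbox m M) < +oo)%E).

Let mf := @measurable_phi m.

Let lebS0 : lebS hb set0 = 0.
Proof. by rewrite /lebS preimage_set0 measure0. Qed.

Let lebS_ge0 A : 0 <= lebS hb A.
Proof. by apply: measure_ge0; rewrite -[X in measurable X]setIT; apply: mf. Qed.

Let lebS_sigma_additive : semi_sigma_additive (lebS hb).
Proof.
move=> F mF tF mUF; rewrite /lebS preimage_bigcup.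
apply: measure_semi_sigma_additive.
- by move=> n; rewrite -[X in measurable X]setTI; exact: mf.
- apply/trivIsetP => /= i j _ _ ij; rewrite -preimage_setI.
  by move/trivIsetP : tF => /(_ _ _ _ _ ij) ->//; rewrite preimage_set0.
- by rewrite -preimage_bigcup -[X in measurable X]setTI; exact: mf.
Qed.

HB.instance Definition _ := isMeasure.Build _ _ _
  (lebS hb) lebS0 lebS_ge0 lebS_sigma_additive.

Lemma lebS_cbox M : lebS hb (cbox m.+1 M) < +oo.
Proof.
rewrite /lebS phi_cbox product_measure1E //; last exact: measurable_cbox.
have H : (lebesgue_measure (`[-M, M]%classic%R : set R) < +oo)%E.
  by rewrite lebesgue_measure_itv /=; case: ifP => _ //; exact: ltry.
apply: lte_mul_pinfty; [exact: measure_ge0| |exact: hb].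
by rewrite ge0_fin_numE//; exact: measure_ge0.
Qed.

Let lebS_sigma_finite : sigma_finite setT (lebS hb).
Proof.
exists (fun k => cbox m.+1 k%:R); first exact: cbox_cover.
by move=> k; split; [exact: measurable_cbox|exact: lebS_cbox].
Qed.

HB.instance Definition _ := @Measure_isSigmaFinite.Build _ _ _
  (lebS hb) lebS_sigma_finite.

End lebS_measure.

Lemma lebn_measure n : exists mu : {sigma_finite_measure set 'rV[R]_n -> \bar R},
  (mu : set _ -> \bar R) = @lebn R n /\ forall M, (mu (cbox n M) < +oo)%E.
Proof.
elim: n => [|m [mu [E hb]]].
  exists (@dirac _ _ (0 : 'rV[R]_0) R); split => // M.
  exact: ltry.
exists (lebS hb); split; last exact: lebS_cbox.
apply/funext => A /=; rewrite /lebS /= E.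
by [].
Qed.

Definition rbox n (c : 'rV[R]_n) (r : R) : set 'rV[R]_n :=
  [set x | forall i, `](c ord0 i - r), (c ord0 i + r)[%classic (x ord0 i)].

Lemma measurable_rbox n c r : measurable (@rbox n c r).
Proof.
by apply: (@measurable_rVset n (fun i => `](c ord0 i - r), (c ord0 i + r)[%classic))
  => i; exact: measurable_itv.
Qed.

Lemma open_measurable_rV n (O : set 'rV[R]_n) : open O -> measurable O.
Proof.
move=> oO.
pose rl (q : 'rV[rat]_n) : 'rV[R]_n := \row_i ratr (q ord0 i).
pose G (q : 'rV[rat]_n * rat) : set 'rV[R]_n :=
  if `[< rbox (rl q.1) (ratr q.2) `<=` O >] then rbox (rl q.1) (ratr q.2) else set0.
have -> : O = \bigcup_q G q.
  apply/seteqP; split => [x Ox|x [q _]]; last first.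
    rewrite /G; case: ifPn => [/asboolP H|_] //; exact: H.
  have := oO x Ox; rewrite /interior => /nbhs_ballP [e e0 beO].
  have /rat_in_itvoo [r]: (0 < e / 2) by rewrite divr_gt0.
  rewrite in_itv /= => /andP [r0 re].
  have H i : exists q : rat, ratr q \in `](x ord0 i - ratr r), (x ord0 i + ratr r)[.
    by apply: rat_in_itvoo; rewrite ltrBlDr -addrA ltrDl addr_gt0.
  pose qv : 'rV[rat]_n := \row_i xchoose (H i).
  have Hq i : `|x ord0 i - ratr (qv ord0 i)| < ratr r.
    rewrite ltr_distlC mxE; have := xchooseP (H i); by rewrite in_itv.
  have sub : rbox (rl qv) (ratr r) `<=` O.
    move=> y Hy; apply: beO.
    split => // i j; rewrite (ord1 i) {i}.
    have := Hy j; rewrite /= in_itv /= mxE -ltr_distl => Hyj.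
    rewrite /ball /=.
    apply: (le_lt_trans (ler_distD (ratr (qv ord0 j)) _ _)).
    have h1 := Hq j.
    have h2 : `|ratr (qv ord0 j) - y ord0 j| < ratr r by rewrite distrC.
    lra.
  exists (qv, r) => //; rewrite /G /=; case: ifPn => [_|/asboolP //].
  move=> i /=; rewrite in_itv /= mxE -ltr_distl; exact: Hq.
apply: countable_bigcupT_measurable; first exact: countableP.
move=> q; rewrite /G; case: ifPn => _ //; exact: measurable_rbox.
Qed.
End rV.
Section analytic.
Context (R : realType).

Lemma powR_bound (a s p P lam : R) : 0 <= a -> 0 <= s -> s <= p -> p <= P -> 0 < lam ->
  a `^ s <= (Num.max 1 lam `^ P) * (1 + (a / lam) `^ p).
Proof.
move=> a0 s0 sp pP lam0.
have p0 : 0 <= p by exact: le_trans sp.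
have m1 : 1 <= Num.max 1 lam by rewrite le_max lexx.
have K1 : 1 <= Num.max 1 lam `^ P.
  have P0 : 0 <= P by exact: le_trans pP.
  by have := ler_powR m1 P0; rewrite powRr0.
have h1 : a `^ s <= 1 + a `^ p.
  have hp := powR_ge0 a p.
  have [a1|a1] := leP a 1.
    have : a `^ s <= 1.
      have := @ge0_ler_powR _ s s0 a 1; rewrite powR1; apply;
        by rewrite ?nnegrE ?ler01.
    lra.
  have := ler_powR (ltW a1) sp; lra.
have h2 : a `^ p <= (Num.max 1 lam `^ P) * (a / lam) `^ p.
  have -> : a `^ p = lam `^ p * (a / lam) `^ p.
    by rewrite -powRM ?divr_ge0 ?(ltW lam0) // [lam * _]mulrC divfK // gt_eqF.
  apply: ler_wpM2r; first exact: powR_ge0.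
  have [l1|l1] := leP lam 1.
    have : lam `^ p <= 1.
      have := @ge0_ler_powR _ p p0 lam 1; rewrite powR1; apply;
        by rewrite ?nnegrE ?ler01 ?(ltW lam0).
    by move=> h; apply: le_trans h _; rewrite powR1.
  by apply: ler_powR => //; exact: ltW.
apply: (le_trans h1); rewrite mulrDr mulr1; exact: lerD.
Qed.


Lemma measurable_powR_comp d (T : measurableType d) (D : set T) (f g : T -> R) :
  measurable_fun D f -> measurable_fun D g ->
  measurable_fun D (fun x => f x `^ g x).
Proof.
move=> mf mg mD; move: (mD); rewrite /powR.
apply: measurable_fun_if => //.
- exact: measurable_realfun.measurable_fun_eqr.
- rewrite (_ : (fun t : T => ((g t == 0)%:R : R)) = (fun x => if g x == 0 then 1 else 0)); last first.
    by apply/funext => x; case: (g x == 0).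
  apply: (measurable_funS mD); first by move=> x [].
  apply: measurable_fun_if => //.
  apply: measurable_realfun.measurable_fun_eqr => //; exact: measurable_cst.
- apply: (measurable_funS mD); first by move=> x [].
  apply: measurableT_comp; first exact: measurable_realfun.measurable_expR.
  apply: measurable_funM => //.
  apply: measurableT_comp => //; exact: measurable_realfun.measurable_ln.
Qed.

Section intbound.
Local Open Scope ereal_scope.
Context d (T : measurableType d) (mu : {measure set T -> \bar R}) (D : set T)
  (mD : measurable D) (muD : mu D < +oo).

Lemma int_bound (f H : T -> R) (K : R) :
  measurable_fun D f -> measurable_fun D H ->
  (forall x, D x -> (0 <= f x)%R) -> (forall x, D x -> (0 <= H x)%R) -> (0 <= K)%R ->
  \int[mu]_(x in D) (H x)%:E < +oo ->
  {ae mu, forall x, D x -> (f x <= K * (1 + H x))%R} ->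
  \int[mu]_(x in D) (f x)%:E < +oo.
Proof.
move=> mf mH f0 H0 K0 IH hae.
have mf' : measurable_fun D (EFin \o f) by exact/measurable_EFinP.
have mH' : measurable_fun D (EFin \o H) by exact/measurable_EFinP.
have hae' : {ae mu, forall x, D x -> (f x)%:E <= K%:E * ((cst 1%R x)%:E + (H x)%:E)}.
  apply: filterS hae => x h Dx; rewrite -EFinD -EFinM lee_fin; exact: h.
have m2 : measurable_fun D (fun x => K%:E * ((cst 1%R x)%:E + (H x)%:E)).
  apply: measurable_funeM; apply: emeasurable_funD => //.
  by apply/measurable_EFinP; exact: measurable_cst.
apply: (le_lt_trans (ae_ge0_le_integral mD _ mf' _ m2 hae')).
- by move=> x Dx; rewrite lee_fin f0.
- by move=> x Dx; rewrite mule_ge0 ?adde_ge0 ?lee_fin ?H0.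
rewrite ge0_integralZl_EFin //; last 2 first.
- by move=> x Dx; rewrite adde_ge0 ?lee_fin ?H0.
- apply: emeasurable_funD => //.
  by apply/measurable_EFinP; exact: measurable_cst.
rewrite ge0_integralD //; last first.
  by apply/measurable_EFinP; exact: measurable_cst.
rewrite (@integral_cst _ _ _ mu D mD 1) mul1e.
apply: lte_mul_pinfty => //.
exact: lte_add_pinfty.
Qed.
End intbound.
End analytic.

Lemma ae_and (R : realType) d (T : measurableType d) (mu : {measure set T -> \bar R})
  (P Q : T -> Prop) :
  {ae mu, forall x, P x} -> {ae mu, forall x, Q x} -> {ae mu, forall x, P x /\ Q x}.
Proof. by move=> hP hQ; apply: filterS2 hP hQ => x. Qed.

Lemma coord_le_norm (R : realType) n (x : 'rV[R]_n) i : `|x ord0 i| <= `|x|.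
Proof.
change (`|x ord0 i| <= mx_norm x); rewrite mx_normrE.
apply: (le_trans _ (le_bigmax _ _ (ord0, i))) => //.
Qed.

Lemma mixed_bound (R : realType) (a c g b : R) : 0 <= a -> 0 <= c -> 0 <= g -> 0 <= b ->
  0 < g + b -> a `^ g * c `^ b <= a `^ (g + b) + c `^ (g + b).
Proof.
move=> a0 c0 g0 b0 gb.
have gbn : (g + b == 0) ==> (a != 0) by rewrite gt_eqF.
have gbn' : (g + b == 0) ==> (c != 0) by rewrite gt_eqF.
have ha := powR_ge0 a (g + b); have hc := powR_ge0 c (g + b).
have [ac|ca] := leP a c.
  have : a `^ g <= c `^ g by apply: ge0_ler_powR; rewrite ?nnegrE.
  have := powR_ge0 c b; have := powR_ge0 a g.
  rewrite (powRD gbn').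
  nra.
have : c `^ b <= a `^ b by apply: ge0_ler_powR; rewrite ?nnegrE // ltW.
have := powR_ge0 a g; have := powR_ge0 c b.
rewrite (powRD gbn).
nra.
Qed.

Unset Implicit Arguments.
Theorem theorem3p5 (R : realType) (n : nat) (hn : (2 <= n)%N)
  (Om : set 'rV[R]_n) (hOm : bounded_domain Om) (hLip : lipschitz_boundary Om)
  (gam bet the p : 'rV[R]_n -> R)
  (hgam : M0 Om gam) (hbet : M0 Om bet) (hthe : M0 Om the) (hp : M0 Om p)
  (eps0 : R) (heps0 : 0 < eps0)
  (hgbt : {ae @lebn R n, forall x, Om x -> gam x + bet x + eps0 <= the x})
  (hpt : {ae @lebn R n, forall x, Om x -> the x <= p x}) :
  W1px Om p `<=` S1 Om gam bet the.
Proof.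
have [mu [Emu hbox]] := lebn_measure R n.
move=> u [[mu_u [lam [lam0 Iu]]] [g [wg [mG [mu0 [mu00 IG]]]]]].
case: hgam => mgam [Pg hgam']; case: hbet => mbet [Pb hbet'].
case: hthe => mthe [Pt hthe']; case: hp => mp [P hP].
rewrite -Emu in Iu IG hgbt hpt hgam' hbet' hthe' hP.
rewrite /S1 -Emu.
case: hOm => _ oOm _ bOm.
have mOm : measurable Om := open_measurable_rV oOm.
have muOm : (mu Om < +oo)%E.
  case: bOm => M [_ HM].
  have /HM HO : M < M + 1 by rewrite ltrDl ltr01.
  apply: (le_lt_trans _ (hbox (M + 1))).
  apply: le_measure; rewrite ?inE //; first exact: measurable_cbox.
  move=> x Ox i; rewrite /= in_itv /= -ler_norml.
  exact: le_trans (coord_le_norm x i) (HO x Ox).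
pose G x := Num.sqrt (\sum_i g i x ^+ 2).
pose H x := (`|u x| / lam) `^ p x + (`|G x| / mu0) `^ p x.
pose K := Num.max 1 lam `^ P + Num.max 1 mu0 `^ P.
have mnu : measurable_fun Om (fun x => `|u x|).
  by apply: measurableT_comp => //.
have mGn : measurable_fun Om (fun x => `|G x|).
  by apply: measurableT_comp => //.
have mb1 : measurable_fun Om (fun x => (`|u x| / lam) `^ p x).
  apply: measurable_powR_comp => //.
  by apply: measurable_funM => //; exact: measurable_cst.
have mb2 : measurable_fun Om (fun x => (`|G x| / mu0) `^ p x).
  apply: measurable_powR_comp => //.
  by apply: measurable_funM => //; exact: measurable_cst.
have mH : measurable_fun Om H by exact: measurable_funD.
have H0 : forall x, Om x -> 0 <= H x by move=> x _; rewrite addr_ge0 ?powR_ge0.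
have IH : (\int[mu]_(x in Om) (H x)%:E < +oo)%E.
  rewrite /H; under eq_integral do rewrite EFinD.
  rewrite ge0_integralD //.
  - exact: lte_add_pinfty.
  - by move=> x _; rewrite lee_fin powR_ge0.
  - exact/measurable_EFinP.
  - by move=> x _; rewrite lee_fin powR_ge0.
  - exact/measurable_EFinP.
have K0 : 0 <= K by rewrite addr_ge0 ?powR_ge0.
have hA : {ae mu, forall x, Om x ->
    [/\ 1 <= gam x, 1 <= bet x, gam x + bet x <= the x, the x <= p x & p x <= P]}.
  have h := ae_and (ae_and (ae_and (ae_and (ae_and hgam' hbet') hthe') hP) hgbt) hpt.
  apply: filterS h => x [[[[[h1 h2] h3] h4] h5] h6] Ox.
  case/andP: (h1 Ox) => ? _; case/andP: (h2 Ox) => ? _; case/andP: (h4 Ox) => ? ?.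
  have := h5 Ox; have := h6 Ox => ? ?; split => //; lra.
have key : forall x s, 0 <= s -> s <= p x -> p x <= P ->
    `|u x| `^ s <= K * (1 + H x).
  move=> x s s0 sp pP.
  have := powR_bound (normr_ge0 (u x)) s0 sp pP lam0.
  have h1 := powR_ge0 (`|G x| / mu0) (p x).
  have hb := powR_ge0 (`|u x| / lam) (p x).
  have KG0 := powR_ge0 (Num.max 1 mu0) P.
  have KU0 := powR_ge0 (Num.max 1 lam) P.
  rewrite /K /H; nra.
have keyG : forall x s, 0 <= s -> s <= p x -> p x <= P ->
    `|G x| `^ s <= K * (1 + H x).
  move=> x s s0 sp pP.
  have := powR_bound (normr_ge0 (G x)) s0 sp pP mu00.
  have h1 := powR_ge0 (`|G x| / mu0) (p x).
  have hb := powR_ge0 (`|u x| / lam) (p x).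
  have KG0 := powR_ge0 (Num.max 1 mu0) P.
  have KU0 := powR_ge0 (Num.max 1 lam) P.
  rewrite /K /H; nra.
split.
  apply/integrableP; split; first exact/measurable_EFinP.
  rewrite (eq_integral (fun x => (`|u x|)%:E)); last by [].
  apply: (int_bound mOm muOm mnu mH _ H0 K0 IH) => //.
  apply: filterS hA => x hx Ox; have [? ? ? ? ?] := hx Ox.
  have := key x 1 ler01; rewrite powRr1 //; apply; lra.
exists g; split => //; split.
  apply: (int_bound mOm muOm (measurable_powR_comp mnu mthe) mH _ H0 K0 IH).
    by move=> x _; exact: powR_ge0.
  apply: filterS hA => x hx Ox; have [? ? ? ? ?] := hx Ox.
  apply: key => //; lra.
move=> i.
have mgi : measurable_fun Om (fun x => `|g i x|).
  by apply: measurableT_comp => //; exact: wg.1.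
apply: (int_bound mOm muOm (measurable_funM (measurable_powR_comp mnu mgam)
   (measurable_powR_comp mgi mbet)) mH _ H0 (addr_ge0 K0 K0) IH).
  by move=> x _; rewrite mulr_ge0 ?powR_ge0.
apply: filterS hA => x hx Ox; have [e1 e2 e3 e4 e5] := hx Ox.
have cG : `|g i x| <= `|G x|.
  rewrite [`|G x|]ger0_norm ?sqrtr_ge0 // -sqrtr_sqr; apply: ler_wsqrtr.
  rewrite (bigD1 i) //= lerDl sumr_ge0 // => j _; exact: sqr_ge0.
have hs0 : 0 <= gam x + bet x by lra.
have hpp : gam x + bet x <= p x by lra.
have h1 := mixed_bound (normr_ge0 (u x)) (normr_ge0 (g i x)) (_ : 0 <= gam x)
  (_ : 0 <= bet x) (_ : 0 < gam x + bet x).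
have h2 := @ge0_ler_powR _ _ hs0 `|g i x| `|G x|.
rewrite !nnegrE /= in h2.
have h3 := key x (gam x + bet x) hs0 hpp e5.
have h4 := keyG x (gam x + bet x) hs0 hpp e5.
have h5 := h2 (normr_ge0 _) (normr_ge0 _) cG.
have h6 := h1 ltac:(lra) ltac:(lra) ltac:(lra).
rewrite /=; lra.
Qed.
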